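(* Assume there is an algorithm $\textsc{Alg}$ that, given a graph $G=(V,E)$ with $|V|=n$ in a dynamic stream, uses $\widetilde{O}(n)$ space and outputs a spanner of $G$ with stretch $\widetilde{O}(n^{\beta})$, for some constant $\beta\in(0,1)$, with failure probability $n^{-c}$ for some constant $c$. Then, for any constant $\alpha\in(0,1)$, one can construct an algorithm that uses $\widetilde{O}(n^{1+\alpha})$ space and outputs a spanner with stretch $\widetilde{O}(n^{\beta(1-\alpha)})$ with failure probability $\widetilde{O}(n^{(2+c)\alpha-c})$.
   Context: Dynamic stream model: a fixed vertex set $V$ of $n$ vertices is known; the (unweighted, undirected) graph's edges arrive as a stream of insertions and deletions; algorithms process the stream with limited memory (space, in bits). A subgraph $K$ of $G$ is a spanner with stretch $t$ if $d_K(u,v)\le t\cdot d_G(u,v)$ for all $u,v\in V$ ($d$ = shortest-path distance). $\widetilde{O}(f)$ means $f\cdot\mathrm{polylog}(n)$. *)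

(* Defs.v *)
From mathcomp Require Import all_boot.
From mathcomp Require Import boolp.
From Stdlib Require Import Reals.
Set Implicit Arguments. Unset Strict Implicit. Unset Printing Implicit Defensive.

(* An undirected edge {u,v} is stored canonically as the pair (u,v) with u < v. *)
Definition edgeset (n : nat) := {set 'I_n * 'I_n}.

Definition adj (n : nat) (E : edgeset n) : rel 'I_n :=
  fun u v => ((u, v) \in E) || ((v, u) \in E).

Definition dist_le (n : nat) (E : edgeset n) (u v : 'I_n) (k : nat) : Prop :=
  exists p : seq 'I_n, [/\ path (adj E) u p, last u p = v & (size p <= k)%N].

(* K is a spanner of G with stretch t: K is a subgraph of G and
   d_K(u,v) <= t * d_G(u,v) for all u v (with d = +oo when disconnected). *)
Definition is_spanner (n : nat) (G K : edgeset n) (t : R) : Prop :=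
  K \subset G /\
  forall (u v : 'I_n) (k : nat), dist_le G u v k ->
    exists k' : nat, (INR k' <= t * INR k)%R /\ dist_le K u v k'.

Definition update (n : nat) := ('I_n * 'I_n * bool)%type.

Definition apply_update (n : nat) (E : edgeset n) (x : update n) : edgeset n :=
  if x.2 then x.1 |: E else E :\ x.1.

Definition valid_update (n : nat) (E : edgeset n) (x : update n) : bool :=
  ((x.1.1 : nat) < x.1.2)%N && (if x.2 then x.1 \notin E else x.1 \in E).

Fixpoint valid_from (n : nat) (E : edgeset n) (s : seq (update n)) : bool :=
  if s is x :: s' then valid_update E x && valid_from (apply_update E x) s' else true.

Definition valid_stream (n : nat) (s : seq (update n)) := valid_from set0 s.

Definition stream_graph (n : nat) (s : seq (update n)) : edgeset n :=
  foldl (@apply_update n) set0 s.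

(* A (non-uniform) randomized streaming algorithm for n-vertex graphs: a uniformly
   random seed of [seedlen] bits, a working state of [statelen] bits; the memory
   (space, in bits) is seedlen + statelen. *)
Record StreamAlg (n : nat) := {
  seedlen : nat;
  statelen : nat;
  a_init : seedlen.-tuple bool -> statelen.-tuple bool;
  a_step : seedlen.-tuple bool -> statelen.-tuple bool -> update n -> statelen.-tuple bool;
  a_out  : seedlen.-tuple bool -> statelen.-tuple bool -> edgeset n }.

Definition space (n : nat) (A : StreamAlg n) : nat := (seedlen A + statelen A)%N.

Definition run_output (n : nat) (A : StreamAlg n) (r : (seedlen A).-tuple bool)
  (s : seq (update n)) : edgeset n :=
  a_out r (foldl (a_step r) (a_init r) s).

Definition fail_prob (n : nat) (A : StreamAlg n) (t : R) (s : seq (update n)) : R :=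
  (INR #|[set r : (seedlen A).-tuple bool |
            `[< ~ is_spanner (stream_graph s) (run_output r s) t >]]|
   / (2 ^ seedlen A))%R.

Definition bigOtilde (f g : nat -> R) : Prop :=
  exists (C : R) (k N : nat), forall n : nat, (N <= n)%N ->
    (f n <= C * g n * (ln (INR n)) ^ k)%R.

(* Main.v *)
Require Import Defs.
From mathcomp Require Import all_boot.
From Stdlib Require Import Reals.
From mathcomp Require Import boolp.
From Stdlib Require Import Lra.
From Stdlib Require ZArith_dec Znat Classical_Prop.
From mathcomp Require Import zify.
Set Implicit Arguments. Unset Strict Implicit. Unset Printing Implicit Defensive.


Section Bij.
Variables (X Y : finType) (H : #|X| = #|Y|).
Definition bij (x : X) : Y := enum_val (cast_ord H (enum_rank x)).
Definition bij_inv (y : Y) : X := enum_val (cast_ord (esym H) (enum_rank y)).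
Lemma bijK : cancel bij bij_inv.
Proof. by move=> x; rewrite /bij /bij_inv enum_valK cast_ordK enum_rankK. Qed.
End Bij.


Lemma path_map_rel (T1 T2 : Type) (e1 : rel T1) (e2 : rel T2) (g : T1 -> T2) :
  (forall a b, e1 a b -> e2 (g a) (g b)) ->
  forall x p, path e1 x p -> path e2 (g x) (map g p).
Proof.
move=> he; move=> x p; elim: p x => [|y p IH] x //= /andP[h1 h2].
by rewrite he // IH.
Qed.

Lemma dist_cat (k : nat) (K : edgeset k) u w v a b :
  dist_le K u w a -> dist_le K w v b -> dist_le K u v (a + b).
Proof.
case=> p [hp hl hs] [q [hq hl' hs']]; exists (p ++ q); split.
- by rewrite cat_path hp hl hq.
- by rewrite last_cat hl.
- by rewrite size_cat leq_add.
Qed.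

Lemma INR_addn a b : INR (a + b)%N = (INR a + INR b)%R.
Proof. by rewrite -plus_INR. Qed.



Lemma card_bigcup_le (I T : finType) (F : I -> {set T}) :
  #|\bigcup_i F i| <= \sum_i #|F i|.
Proof.
elim/big_rec2: _ => [|i k U _ h]; first by rewrite cards0.
by rewrite (leq_trans (leq_card_setU _ _)) // leq_add2l.
Qed.

Lemma sum_INR_le (I : finType) (f : I -> nat) c :
  (forall i, INR (f i) <= c)%R -> (INR (\sum_i f i) <= INR #|I| * c)%R.
Proof.
move=> hf; rewrite -big_enum /= cardE.
elim: (enum I) => [|x s IH]; rewrite ?big_nil ?big_cons; first by simpl; lra.
rewrite INR_addn [size _]/= S_INR; have := hf x; lra.
Qed.

Lemma div_le a p X : (0 < p)%R -> (a <= X * p)%R -> (a / p <= X)%R.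
Proof.
move=> hp h; apply: (Rmult_le_reg_r p) => //.
rewrite /Rdiv Rmult_assoc Rinv_l; lra.
Qed.

Lemma INR_expn a b : INR (expn a b) = (INR a ^ b)%R.
Proof.
elim: b => [|b IH]; first by rewrite expn0.
by rewrite expnS mult_INR IH.
Qed.

Lemma fail_le1 k (A : StreamAlg k) t s : (fail_prob A t s <= 1)%R.
Proof.
rewrite /fail_prob; apply: div_le; first by apply: pow_lt; lra.
rewrite Rmult_1_l.
have h := max_card [set r : (seedlen A).-tuple bool | `[< ~ is_spanner (stream_graph s) (run_output r s) t >]].
rewrite card_tuple card_bool in h.
have := le_INR _ _ (elimTF leP h); rewrite INR_expn.
by replace (INR 2) with 2%R by (simpl; lra).
Qed.

Section Comb.
Variables (n m0 : nat).
Local Notation m := m0.+1.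
Local Notation B := (n %/ m).+1.
Local Notation M := (m + m).

Definition bk (u : 'I_n) : 'I_B := inord (u %/ m).
Lemma bkE u : (bk u : nat) = u %/ m.
Proof. by rewrite inordK // ltnS leq_div2r // ltnW. Qed.

Lemma lo_lt (u : 'I_n) : u %% m < M.
Proof. by rewrite ltn_addr // ltn_pmod. Qed.
Lemma hi_lt (u : 'I_n) : m + u %% m < M.
Proof. by rewrite ltn_add2l ltn_pmod. Qed.

Definition loc (i : 'I_B) (u : 'I_n) : 'I_M :=
  if bk u == i then Ordinal (lo_lt u) else Ordinal (hi_lt u).
Definition bucket (e : 'I_n * 'I_n) : 'I_B * 'I_B := (bk e.1, bk e.2).
Definition fe (ij : 'I_B * 'I_B) (e : 'I_n * 'I_n) : 'I_M * 'I_M :=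
  (loc ij.1 e.1, loc ij.1 e.2).
Definition tr (ij : 'I_B * 'I_B) (x : update n) : option (update M) :=
  if bucket x.1 == ij then Some (fe ij x.1, x.2) else None.
Definition Fg (ij : 'I_B * 'I_B) (E : edgeset n) : edgeset M :=
  [set e' | [exists e, [&& e \in E, bucket e == ij & fe ij e == e']]].

Lemma same_block (u v : 'I_n) : bk u = bk v -> u %% m = v %% m -> u = v.
Proof.
move=> /(congr1 (@nat_of_ord _)); rewrite !bkE => h1 h2; apply: val_inj.
by rewrite /= (divn_eq u m) (divn_eq v m) h1 h2.
Qed.

Lemma loc_inj i u v : bk u = bk v -> loc i u = loc i v -> u = v.
Proof.
rewrite /loc => h; rewrite h; case: ifP => _ /(congr1 val) /= e;
  apply: same_block => //; exact: (addnI e).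
Qed.

Lemma fe_inj ij e e' : bucket e = ij -> bucket e' = ij -> fe ij e = fe ij e' -> e = e'.
Proof.
case: e e' => [u v] [u' v']; rewrite /bucket /fe /= => hb hb' [h1 h2].
rewrite -hb' in hb; case: hb => hu hv.
by rewrite (loc_inj hu h1) (loc_inj hv h2).
Qed.

Lemma fe_lt ij e : bucket e = ij -> e.1 < e.2 -> (fe ij e).1 < (fe ij e).2.
Proof.
case: e => u v; rewrite /bucket /fe /= => <- /= huv.
rewrite /loc eqxx; case: ifP => /eqP h /=.
  have := congr1 (@nat_of_ord _) h; rewrite !bkE => hd.
  have := divn_eq u m; have := divn_eq v m; lia.
by rewrite ltn_addr // ltn_pmod.
Qed.

Lemma Fg_mem ij e E : bucket e = ij -> (fe ij e \in Fg ij E) = (e \in E).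
Proof.
move=> he; rewrite inE; apply/existsP/idP => [[e0 /and3P[h0 /eqP b0 /eqP f0]]|h].
  by rewrite -(fe_inj b0 he f0).
by exists e; rewrite h he !eqxx.
Qed.

Lemma Fg_U1 ij e E : bucket e = ij -> Fg ij (e |: E) = fe ij e |: Fg ij E.
Proof.
move=> he; apply/setP => e'; rewrite !inE; apply/existsP/orP.
  case=> e0 /and3P[]; rewrite !inE => /orP[/eqP->|h0] b0 /eqP f0.
    by left; rewrite f0.
  by right; apply/existsP; exists e0; rewrite h0 b0 f0 eqxx.
case=> [/eqP->|/existsP[e0 /and3P[h0 b0 f0]]].
  by exists e; rewrite setU11 he !eqxx.
by exists e0; rewrite inE h0 orbT b0 f0.
Qed.

Lemma Fg_D1 ij e E : bucket e = ij -> Fg ij (E :\ e) = Fg ij E :\ fe ij e.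
Proof.
move=> he; apply/setP => e'; rewrite !inE; apply/existsP/andP.
  case=> e0 /and3P[]; rewrite !inE => /andP[ne h0] b0 /eqP f0; split.
    rewrite -f0; apply: contra ne => /eqP hf; apply/eqP.
    exact: (fe_inj (eqP b0) he hf).
  by apply/existsP; exists e0; rewrite h0 b0 f0 eqxx.
case=> ne /existsP[e0 /and3P[h0 b0 /eqP f0]]; exists e0.
rewrite !inE h0 b0 f0 eqxx !andbT /=.
by apply: contra ne => /eqP ee; rewrite -f0 ee.
Qed.

Lemma Fg_U1' ij e E : bucket e != ij -> Fg ij (e |: E) = Fg ij E.
Proof.
move=> he; apply/setP => e'; rewrite !inE; apply/existsP/existsP.
  case=> e0 /and3P[]; rewrite !inE => /orP[/eqP->|h0] b0 f0.
    by rewrite b0 in he.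
  by exists e0; rewrite h0 b0 f0.
by case=> e0 /and3P[h0 b0 f0]; exists e0; rewrite inE h0 orbT b0 f0.
Qed.

Lemma Fg_D1' ij e E : bucket e != ij -> Fg ij (E :\ e) = Fg ij E.
Proof.
move=> he; apply/setP => e'; rewrite !inE; apply/existsP/existsP.
  by case=> e0 /and3P[]; rewrite inE => /andP[_ h0] b0 f0; exists e0; rewrite h0 b0 f0.
case=> e0 /and3P[h0 b0 f0]; exists e0; rewrite !inE h0 b0 f0 andbT /=.
rewrite ?andbT ?eqb_id; apply/negP => /eqP ee; move: he; by rewrite -ee b0.
Qed.

Lemma Fg0 ij : Fg ij set0 = set0.
Proof.
apply/setP => e'; rewrite !inE; apply/existsP => -[e0]; by rewrite inE.
Qed.

Lemma inst_valid ij : forall s E, valid_from E s ->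
  valid_from (Fg ij E) (pmap (tr ij) s) /\
  foldl (@apply_update M) (Fg ij E) (pmap (tr ij) s) = Fg ij (foldl (@apply_update n) E s).
Proof.
elim => [|x s IH] E //=; case/andP => hv hs; have [IH1 IH2] := IH _ hs.
rewrite /tr; case: eqP => hb /=.
  have hE : apply_update (Fg ij E) (fe ij x.1, x.2) = Fg ij (apply_update E x).
    by rewrite /apply_update /=; case: x.2; [rewrite Fg_U1 | rewrite Fg_D1].
  rewrite hE IH1 IH2 andbT; split => //.
  move: hv; rewrite /valid_update /= => /andP[hlt h]; rewrite fe_lt //=.
  by case: x.2 h; rewrite Fg_mem.
have hE : Fg ij (apply_update E x) = Fg ij E.
  by rewrite /apply_update; case: x.2; [rewrite Fg_U1' | rewrite Fg_D1']; apply/eqP.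
by rewrite -hE.
Qed.

Lemma inst_graph ij s : valid_stream s ->
  valid_stream (pmap (tr ij) s) /\ stream_graph (pmap (tr ij) s) = Fg ij (stream_graph s).
Proof.
move=> hs; have := inst_valid ij hs; rewrite Fg0 => -[h1 h2]; split => //.
Qed.


Definition gmap (i j : 'I_B) (d : 'I_n) (w : 'I_M) : 'I_n :=
  insubd d (if w < m then i * m + w else j * m + (w - m)).

Lemma gmap_loc i j d (x : 'I_n) : (bk x == i) || (bk x == j) ->
  gmap i j d (loc i x) = x.
Proof.
move=> hx; apply: val_inj; rewrite /gmap /loc.
case hi: (bk x == i); rewrite val_insubd /=.
  by rewrite ltn_pmod // -(eqP hi) bkE -divn_eq ltn_ord.
have hj : bk x = j by case/orP: hx => /eqP h; [by rewrite h eqxx in hi | exact h].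
have -> : (m + x %% m < m) = false by rewrite ltnNge leq_addr.
by rewrite addKn -hj bkE -divn_eq ltn_ord.
Qed.

Section Span.
Variables (G : edgeset n) (K : 'I_B * 'I_B -> edgeset M) (t : R).
Definition Kc : edgeset n := [set e | fe (bucket e) e \in K (bucket e)].
Hypothesis hK : forall ij, is_spanner (Fg ij G) (K ij) t.

Lemma Kc_sub : Kc \subset G.
Proof.
apply/subsetP => e; rewrite inE => h.
by have := (hK (bucket e)).1 => /subsetP /(_ _ h); rewrite Fg_mem.
Qed.

Lemma memK ij d w1 w2 : (w1, w2) \in K ij ->
  (gmap ij.1 ij.2 d w1, gmap ij.1 ij.2 d w2) \in Kc.
Proof.
move=> h; have := (hK ij).1 => /subsetP /(_ _ h).
rewrite inE => /existsP[[u v] /and3P[h0 /eqP b0 /eqP f0]].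
rewrite /bucket /= in b0; subst ij.
rewrite /fe /= in f0; case: f0 => f1 f2; rewrite -f1 -f2 in h *.
rewrite !gmap_loc ?eqxx ?orbT //.
by rewrite inE /bucket /fe /=.
Qed.

Lemma adjK ij d w1 w2 : adj (K ij) w1 w2 ->
  adj Kc (gmap ij.1 ij.2 d w1) (gmap ij.1 ij.2 d w2).
Proof. by rewrite /adj => /orP[h|h]; apply/orP; [left|right]; apply: memK. Qed.

Lemma edge_aux (e : 'I_n * 'I_n) a b : e \in G ->
  ((a == e.1) && (b == e.2)) || ((a == e.2) && (b == e.1)) ->
  exists k', (INR k' <= t)%R /\ dist_le Kc a b k'.
Proof.
case: e => u v /= he hab; set ij := bucket (u, v).
have hm : (loc ij.1 u, loc ij.1 v) \in Fg ij G by rewrite -[(loc _ u, _)]/(fe ij (u, v)) Fg_mem.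
have hadj : adj (Fg ij G) (loc ij.1 a) (loc ij.1 b).
  by case/orP: hab => /andP[/eqP -> /eqP ->]; rewrite /adj hm ?orbT.
have hd : dist_le (Fg ij G) (loc ij.1 a) (loc ij.1 b) 1.
  by exists [:: loc ij.1 b]; rewrite /= hadj.
have [k' [hk [p' [hp hl hs]]]] := (hK ij).2 _ _ _ hd.
exists k'; split; first by move: hk; rewrite /= Rmult_1_r.
have hbk : forall x, (x == u) || (x == v) -> (bk x == ij.1) || (bk x == ij.2).
  by move=> x /orP[] /eqP ->; rewrite eqxx ?orbT.
have ha : gmap ij.1 ij.2 a (loc ij.1 a) = a.
  by rewrite gmap_loc //; apply: hbk; case/orP: hab => /andP[-> _]; rewrite ?orbT.
have hb : gmap ij.1 ij.2 a (loc ij.1 b) = b.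
  by rewrite gmap_loc //; apply: hbk; case/orP: hab => /andP[_ ->]; rewrite ?orbT.
exists (map (gmap ij.1 ij.2 a) p'); split.
- by have := path_map_rel (@adjK ij a) hp; rewrite ha.
- by rewrite -{1}ha last_map hl hb.
- by rewrite size_map.
Qed.

Lemma edge_step u v : adj G u v -> exists k', (INR k' <= t)%R /\ dist_le Kc u v k'.
Proof.
case/orP => h; [apply: (@edge_aux (u, v)) | apply: (@edge_aux (v, u))];
  [exact h | by rewrite /= !eqxx ?orbT | exact h | by rewrite /= !eqxx ?orbT].
Qed.

Lemma path_step p u : path (adj G) u p ->
  exists k', (INR k' <= t * INR (size p))%R /\ dist_le Kc u (last u p) k'.
Proof.
elim: p u => [|v p IH] u hp.
  exists 0%N; split; first by simpl; lra.
  by exists [::].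
case/andP: hp => h1 h2; have [k1 [hk1 d1]] := edge_step h1.
have [k2 [hk2 d2]] := IH _ h2.
exists (k1 + k2)%N; split; last exact: dist_cat d1 d2.
rewrite INR_addn [size _]/= S_INR Rmult_plus_distr_l Rmult_1_r; lra.
Qed.

Hypothesis ht : (0 <= t)%R.
Lemma Kc_spanner : is_spanner G Kc t.
Proof.
split; first exact: Kc_sub.
move=> u v k [p [hp hl hs]]; have [k' [hk hd]] := path_step hp.
exists k'; split; last by rewrite -hl.
apply: Rle_trans hk _; apply: Rmult_le_compat_l => //; apply: le_INR; exact/leP.
Qed.
End Span.


Variable A : StreamAlg M.
Local Notation T := (statelen A).
Definition stT := {ffun 'I_B * 'I_B -> T.-tuple bool}.
Lemma cardST : #|{: stT}| = #|{: (T * (B * B)).-tuple bool}|.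
Proof. by rewrite card_ffun !card_tuple card_bool card_prod card_ord -expnM. Qed.
Definition enc : stT -> (T * (B * B)).-tuple bool := bij cardST.
Definition dec : (T * (B * B)).-tuple bool -> stT := bij_inv cardST.
Lemma encK : cancel enc dec. Proof. exact: bijK. Qed.

Definition comb : StreamAlg n := {|
  seedlen := seedlen A;
  statelen := T * (B * B);
  a_init := fun r => enc [ffun _ => a_init r];
  a_step := fun r st x => enc [ffun ij => if tr ij x is Some y then a_step r (dec st ij) y else dec st ij];
  a_out := fun r st => [set e | fe (bucket e) e \in a_out r (dec st (bucket e))] |}.

Lemma comb_fold r : forall s (st : stT),
  foldl (a_step (s:=comb) r) (enc st) s =
  enc [ffun ij => foldl (a_step (s:=A) r) (st ij) (pmap (tr ij) s)].
Proof.
elim => [|x s IH] st /=.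
  by rewrite ffunK.
rewrite encK; etransitivity; first exact: IH.
congr enc; apply/ffunP => ij; rewrite !ffunE.
by case: (tr ij x).
Qed.

Lemma comb_out r s : @run_output n comb r s =
  Kc (fun ij => @run_output M A r (pmap (tr ij) s)).
Proof.
rewrite /run_output /= comb_fold encK; apply/setP => e; rewrite !inE ffunE.
by rewrite ffunE.
Qed.

Lemma comb_fail_sub (t : R) s : valid_stream s -> (0 <= t)%R ->
  [set r : (seedlen A).-tuple bool | `[< ~ is_spanner (stream_graph s) (@run_output n comb r s) t >]]
  \subset \bigcup_ij [set r : (seedlen A).-tuple bool |
     `[< ~ is_spanner (stream_graph (pmap (tr ij) s)) (@run_output M A r (pmap (tr ij) s)) t >]].
Proof.
move=> hs ht; apply/subsetP => r; rewrite inE => /asboolP hn.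
apply/bigcupP; apply: Classical_Prop.NNPP => hno; apply: hn.
rewrite comb_out; apply: Kc_spanner => // ij.
apply: Classical_Prop.NNPP => hsp; apply: hno; exists ij => //.
rewrite inE; apply/asboolP; by rewrite (inst_graph ij hs).2.
Qed.

Lemma comb_fail_prob t s b : valid_stream s -> (0 <= t)%R ->
  (forall ij, fail_prob A t (pmap (tr ij) s) <= b)%R ->
  (fail_prob comb t s <= INR (B * B) * b)%R.
Proof.
move=> hs ht hb; rewrite /fail_prob; apply: div_le; first by apply: pow_lt; lra.
have h1 := leq_trans (subset_leq_card (comb_fail_sub hs ht)) (card_bigcup_le _).
apply: Rle_trans; first exact: (le_INR _ _ (elimTF leP h1)).
have := @sum_INR_le _ (fun ij => #|[set r : (seedlen A).-tuple bool |
     `[< ~ is_spanner (stream_graph (pmap (tr ij) s)) (@run_output M A r (pmap (tr ij) s)) t >]]|)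
   (b * 2 ^ seedlen A)%R.
rewrite card_prod card_ord Rmult_assoc /=; apply.
move=> ij; have := hb ij; rewrite /fail_prob => h.
have hp : (0 < 2 ^ seedlen A)%R by apply: pow_lt; lra.
have := Rmult_le_compat_r _ _ _ (Rlt_le _ _ hp) h.
rewrite /Rdiv Rmult_assoc Rinv_l ?Rmult_1_r; [move=> hh; exact hh | exact: Rgt_not_eq].
Qed.
End Comb.


Lemma ln_le' x y : (0 < x)%R -> (x <= y)%R -> (ln x <= ln y)%R.
Proof.
move=> hx /Rle_lt_or_eq_dec [h|->]; last lra.
by apply: Rlt_le; apply: ln_increasing.
Qed.

Lemma Rpower_pos x y : (0 < Rpower x y)%R.
Proof. exact: exp_pos. Qed.

Lemma nat_ge (y : R) : exists N : nat, (y <= INR N)%R.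
Proof.
have [h1 h2] := archimed y.
case: (ZArith_dec.Z_le_gt_dec 0 (up y)) => hz.
  by exists (Z.to_nat (up y)); rewrite INR_IZR_INZ Znat.Z2Nat.id //; lra.
exists 0%N; have := IZR_lt _ _ (Z.gt_lt _ _ hz); simpl; lra.
Qed.

Lemma INR_up y : (0 <= y)%R -> INR (Z.to_nat (up y)) = IZR (up y).
Proof.
move=> hy; have [h1 h2] := archimed y.
rewrite INR_IZR_INZ Znat.Z2Nat.id //; apply: le_IZR; simpl; lra.
Qed.

Lemma Rpower_ge1 x y : (1 <= x)%R -> (0 <= y)%R -> (1 <= Rpower x y)%R.
Proof.
move=> hx hy; rewrite -(Rpower_O x); last lra.
exact: Rle_Rpower.
Qed.

Section Asym.
Variable alpha : R.
Hypothesis ha : (0 < alpha < 1)%R.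

Definition xf (n : nat) := Rpower (INR n) (1 - alpha).
Definition m0f (n : nat) := Z.to_nat (up (xf n)).
Definition Mf (n : nat) := ((m0f n).+1 + (m0f n).+1)%N.
Definition Bf (n : nat) := (n %/ (m0f n).+1).+1.

Lemma thresh (K : nat) : exists N0 : nat, forall n, (N0 <= n)%N -> (INR K <= xf n)%R.
Proof.
have [N0 hN0] := nat_ge (Rpower (INR K + 1) (/ (1 - alpha))).
exists N0 => n hn.
have hn' : (INR N0 <= INR n)%R by apply: le_INR; apply/leP.
have hp := Rpower_pos (INR K + 1) (/ (1 - alpha)).
have hK := pos_INR K.
apply: Rle_trans (_ : Rpower (Rpower (INR K + 1) (/ (1 - alpha))) (1 - alpha) <= _)%R.
  rewrite Rpower_mult Rinv_l; last lra.
  rewrite Rpower_1; lra.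
rewrite /xf; apply: Rle_Rpower_l; lra.
Qed.

Section Facts.
Variable n : nat.
Hypothesis hn : (6 <= n)%N.

Lemma n_ge6 : (6 <= INR n)%R.
Proof. by have := le_INR _ _ (elimTF leP hn); simpl; lra. Qed.

Lemma x_ge1 : (1 <= xf n)%R.
Proof. have := n_ge6; rewrite /xf => h; apply: Rpower_ge1; lra. Qed.

Lemma x_le_n : (xf n <= INR n)%R.
Proof.
have := n_ge6 => h; rewrite /xf -{2}(Rpower_1 (INR n)); last lra.
apply: Rle_Rpower; lra.
Qed.

Lemma m_bounds : (xf n + 1 < INR (m0f n).+1 <= xf n + 2)%R.
Proof.
have := x_ge1 => h1; have [a1 a2] := archimed (xf n).
rewrite S_INR /m0f INR_up; lra.
Qed.

Lemma M_bounds : (xf n <= INR (Mf n) <= 6 * xf n)%R.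
Proof.
have := m_bounds; have := x_ge1; rewrite /Mf INR_addn; lra.
Qed.

Lemma npow_x : (Rpower (INR n) alpha * xf n = INR n)%R.
Proof.
have := n_ge6 => h.
rewrite /xf -Rpower_plus; replace (alpha + (1 - alpha))%R with 1%R by ring.
by rewrite Rpower_1; lra.
Qed.

Lemma B_bound : (INR (Bf n * Bf n) <= 4 * Rpower (INR n) (2 * alpha))%R.
Proof.
have h6 := n_ge6; have hx := x_ge1; have [hm1 hm2] := m_bounds.
have hq : (INR (n %/ (m0f n).+1) * INR (m0f n).+1 <= INR n)%R.
  rewrite -mult_INR; apply: le_INR; apply/leP; exact: leq_trunc_div.
have hq2 : (INR (n %/ (m0f n).+1) * xf n <= INR n)%R.
  apply: Rle_trans hq; apply: Rmult_le_compat_l; [exact: pos_INR | lra].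
have ha1 : (1 <= Rpower (INR n) alpha)%R by apply: Rpower_ge1; lra.
have hq3 : (INR (n %/ (m0f n).+1) <= Rpower (INR n) alpha)%R.
  apply: (Rmult_le_reg_r (xf n)); first lra.
  by rewrite npow_x.
have hB : (INR (Bf n) <= 2 * Rpower (INR n) alpha)%R by rewrite /Bf S_INR; lra.
have hB0 := pos_INR (Bf n).
replace (2 * alpha)%R with (alpha + alpha)%R by ring.
rewrite mult_INR Rpower_plus.
have := Rmult_le_compat _ _ _ _ hB0 hB0 hB hB; lra.
Qed.

Lemma lnM_bounds : (0 <= ln (INR (Mf n)) <= 2 * ln (INR n))%R.
Proof.
have h6 := n_ge6; have hx := x_ge1; have hxn := x_le_n; have [hM1 hM2] := M_bounds.
split.
  rewrite -ln_1; apply: ln_le'; lra.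
have -> : (2 * ln (INR n) = ln (INR n * INR n))%R by rewrite ln_mult; lra.
apply: ln_le'; first lra.
nra.
Qed.
End Facts.
End Asym.

Lemma spanner_mono k (G K : edgeset k) t1 t2 : (t1 <= t2)%R ->
  is_spanner G K t1 -> is_spanner G K t2.
Proof.
move=> h [hs hd]; split => // u v kk hk; have [k' [h1 h2]] := hd u v kk hk.
exists k'; split => //; apply: Rle_trans h1 _.
by apply: Rmult_le_compat_r; [exact: pos_INR | exact h].
Qed.

Lemma fail_mono k (A : StreamAlg k) t1 t2 s : (t1 <= t2)%R ->
  (fail_prob A t2 s <= fail_prob A t1 s)%R.
Proof.
move=> h; rewrite /fail_prob /Rdiv; apply: Rmult_le_compat_r.
  by left; apply: Rinv_0_lt_compat; apply: pow_lt; lra.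
apply: le_INR; apply/leP; apply: subset_leq_card; apply/subsetP => r.
rewrite !inE => /asboolP hh; apply/asboolP => h'; apply: hh; exact: spanner_mono h'.
Qed.

Lemma nat_aux a b P : (0 < P)%N -> (a + b * P <= P * (a + b))%N.
Proof. move=> h; nia. Qed.

Theorem theorem4p7 (beta c : R) :
  (0 < beta < 1)%R -> (0 < c)%R ->
  (exists (Alg : forall n : nat, StreamAlg n) (t : nat -> R),
     bigOtilde (fun n => INR (space (Alg n))) (fun n => INR n) /\
     bigOtilde t (fun n => Rpower (INR n) beta) /\
     exists N : nat, forall (n : nat) (s : seq (update n)), (N <= n)%N ->
       valid_stream s -> (fail_prob (Alg n) (t n) s <= Rpower (INR n) (- c))%R) ->
  forall alpha : R, (0 < alpha < 1)%R ->
  exists (Alg' : forall n : nat, StreamAlg n) (t' delta : nat -> R),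
    bigOtilde (fun n => INR (space (Alg' n))) (fun n => Rpower (INR n) (1 + alpha)) /\
    bigOtilde t' (fun n => Rpower (INR n) (beta * (1 - alpha))) /\
    bigOtilde delta (fun n => Rpower (INR n) ((2 + c) * alpha - c)) /\
    forall (n : nat) (s : seq (update n)),
      valid_stream s -> (fail_prob (Alg' n) (t' n) s <= delta n)%R.
Proof.
move=> hb hc [Alg [t [[C1 [k1 [N1 hsp]]] [[C2 [k2 [N2 htt]]] [N3 hf]]]]] alpha ha.
have [N0 hN0] := thresh ha (N1 + N2 + N3).
have hMN : forall n, (6 + N0 <= n)%N ->
    [/\ (6 <= n)%N, (N1 <= Mf alpha n)%N, (N2 <= Mf alpha n)%N & (N3 <= Mf alpha n)%N].
  move=> n hn; have h6 : (6 <= n)%N by lia.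
  have := hN0 n (leq_trans (leq_addl _ _) hn); have [hM1 _] := M_bounds ha h6.
  move=> hx; have hle : (N1 + N2 + N3 <= Mf alpha n)%N.
    by apply/leP; apply: INR_le; lra.
  split => //; lia.
exists (fun n => @comb n (m0f alpha n) (Alg _)),
  (fun n => Rmax (t (Mf alpha n)) 0),
  (fun n => if (N3 <= Mf alpha n)%N then
     (INR (Bf alpha n * Bf alpha n) * Rpower (INR (Mf alpha n)) (- c))%R else 1%R).
split; [|split; [|split]].
- exists (4 * (Rabs C1 * 6 * 2 ^ k1))%R, k1, (6 + N0)%N => n hn.
  have [h6 hM1' _ _] := hMN n hn.
  have [hM1 hM2'] := M_bounds ha h6; have hx := x_ge1 ha h6.
  have hn6 := n_ge6 h6; have [hl1 hl2] := lnM_bounds ha h6.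
  have hB := B_bound ha h6.
  have hS := hsp _ hM1'.
  set A := Alg (Mf alpha n) in hS *.
  set M := INR (Mf alpha n) in hS hM1 hM2' hl1 hl2 *.
  set L := ln (INR n) in hl2 *.
  have hsp' : (space (@comb n (m0f alpha n) A) <= (Bf alpha n * Bf alpha n) * space A)%N.
    by rewrite /space /=; apply: nat_aux; rewrite muln_gt0.
  apply: Rle_trans; first exact: (le_INR _ _ (elimTF leP hsp')).
  rewrite mult_INR.
  have e : Rpower (INR n) (1 + alpha) = (Rpower (INR n) (2 * alpha) * xf alpha n)%R.
    rewrite /xf -Rpower_plus; congr Rpower; ring.
  rewrite e.
  have hg : (INR (space A) <= Rabs C1 * (6 * xf alpha n) * (2 ^ k1 * L ^ k1))%R.
    apply: Rle_trans; first exact: hS.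
    apply: Rle_trans (_ : Rabs C1 * (M * ln M ^ k1) <= _)%R.
      rewrite Rmult_assoc; apply: Rmult_le_compat_r; last exact: Rle_abs.
      by apply: Rmult_le_pos; [lra | exact: pow_le].
    rewrite Rmult_assoc; apply: Rmult_le_compat_l; first exact: Rabs_pos.
    apply: Rmult_le_compat; [lra | exact: pow_le | lra |].
    rewrite -Rpow_mult_distr; apply: pow_incr; lra.
  have := Rmult_le_compat _ _ _ _ (pos_INR _) (pos_INR _) hB hg.
  move=> h; apply: Rle_trans h _; right; ring.
- exists (Rabs C2 * Rpower 6 beta * 2 ^ k2)%R, k2, (6 + N0)%N => n hn.
  have [h6 _ hM2 _] := hMN n hn.
  have [hM1 hM2'] := M_bounds ha h6; have hx := x_ge1 ha h6.
  have hn6 := n_ge6 h6; have [hl1 hl2] := lnM_bounds ha h6.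
  have hT := htt _ hM2.
  set M := INR (Mf alpha n) in hT hM1 hM2' hl1 hl2 *.
  set L := ln (INR n) in hl2 *.
  have hg0 : (0 <= Rpower M beta * ln M ^ k2)%R.
    by apply: Rmult_le_pos; [left; exact: Rpower_pos | exact: pow_le].
  have hg : (Rpower M beta * ln M ^ k2 <=
      Rpower 6 beta * Rpower (INR n) (beta * (1 - alpha)) * (2 ^ k2 * L ^ k2))%R.
    apply: Rmult_le_compat => //; first by left; exact: Rpower_pos.
    + exact: pow_le.
    + replace (beta * (1 - alpha))%R with ((1 - alpha) * beta)%R by ring.
      rewrite -Rpower_mult -/(xf alpha n) Rpower_mult_distr; try lra.
      apply: Rle_Rpower_l; lra.
    + rewrite -Rpow_mult_distr; apply: pow_incr; lra.
  apply: Rmax_lub.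
    apply: Rle_trans; first exact: hT.
    rewrite Rmult_assoc; apply: Rle_trans (_ : Rabs C2 * (Rpower M beta * ln M ^ k2) <= _)%R.
      by apply: Rmult_le_compat_r => //; exact: Rle_abs.
    have := Rmult_le_compat_l _ _ _ (Rabs_pos C2) hg.
    move=> h; apply: Rle_trans h _; right; ring.
  have := Rmult_le_pos _ _ (Rabs_pos C2) hg0.
  move=> h; apply: Rle_trans h _.
  have := Rmult_le_compat_l _ _ _ (Rabs_pos C2) hg.
  move=> h; apply: Rle_trans h _; right; ring.
- exists 4%R, 0%N, (6 + N0)%N => n hn.
  have [h6 _ _ hM3] := hMN n hn; rewrite hM3 pow_O Rmult_1_r.
  have hB := B_bound ha h6; have [hM1 hM2] := M_bounds ha h6; have hx := x_ge1 ha h6.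
  have hn6 := n_ge6 h6.
  have hR : (Rpower (INR (Mf alpha n)) (- c) <= Rpower (xf alpha n) (- c))%R.
    rewrite !Rpower_Ropp; apply: Rinv_le_contravar; first exact: Rpower_pos.
    apply: Rle_Rpower_l; lra.
  have e : Rpower (INR n) ((2 + c) * alpha - c) =
      (Rpower (INR n) (2 * alpha) * Rpower (xf alpha n) (- c))%R.
    rewrite /xf Rpower_mult -Rpower_plus; congr Rpower; ring.
  rewrite e -Rmult_assoc; apply: Rmult_le_compat => //.
  + exact: pos_INR.
  + by left; exact: Rpower_pos.
- move=> n s hs; case: ifP => hM3; last exact: fail_le1.
  apply: comb_fail_prob => //; first exact: Rmax_r.
  move=> ij; apply: Rle_trans; first apply: (fail_mono _ _ (Rmax_l _ _)).
  by apply: hf => //; exact: (inst_graph ij hs).1.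
Qed.
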